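(* Assume the bound condition (B) holds with constants $A,D>0$ and that $\max\{\Delta x,\Delta y\}\le 2D/A$. Suppose $f\equiv 0$. Then, for any time step $\Delta t=T/N_t$ (no restriction on $\Delta t$), any grid function $v$ satisfying the scheme (IFDS) satisfies $$\|v^{k}\|_\infty\le \|v^{0}\|_\infty\qquad\text{for all }k=1,\dots,N_t .$$
   Context: Fix $0<\alpha<1$, $T>0$ and a rectangle $\Omega=(x_L,x_R)\times(y_L,y_R)$. Let $a,b,c,d,f$ be real functions on $\overline\Omega\times[0,T]$ and $\psi$ a real function on $\overline\Omega$. Grid: for positive integers $N_x,N_y,N_t$ put $\Delta x=(x_R-x_L)/N_x$, $\Delta y=(y_R-y_L)/N_y$, $\Delta t=T/N_t$, $x_i=x_L+i\Delta x$, $y_j=y_L+j\Delta y$, $t_k=k\Delta t$, and for a function $g$ write $g_{i,j}^k=g(x_i,y_j,t_k)$. Let $\sigma_{\alpha,\Delta t}=\frac{1}{(\Delta t)^\alpha\Gamma(2-\alpha)}$ and $\omega_s=(s+1)^{1-\alpha}-s^{1-\alpha}$ for $s\ge0$. Scheme (IFDS): a grid function $(v_{i,j}^k)_{0\le i\le N_x,\,0\le j\le N_y,\,0\le k\le N_t}$ with $v_{i,j}^0=\psi(x_i,y_j)$, $v_{i,j}^k=0$ whenever $i\in\{0,N_x\}$ or $j\in\{0,N_y\}$ (for $k\ge1$), and for all $1\le i\le N_x-1$, $1\le j\le N_y-1$, $0\le k\le N_t-1$: $$\sigma_{\alpha,\Delta t}\sum_{s=0}^{k}\omega_s\big(v_{i,j}^{k-s+1}-v_{i,j}^{k-s}\big)+a_{i,j}^{k+1}\frac{v_{i+1,j}^{k+1}-v_{i-1,j}^{k+1}}{2\Delta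 x}+b_{i,j}^{k+1}\frac{v_{i,j+1}^{k+1}-v_{i,j-1}^{k+1}}{2\Delta y}$$ $$=c_{i,j}^{k+1}\frac{v_{i+1,j}^{k+1}-2v_{i,j}^{k+1}+v_{i-1,j}^{k+1}}{(\Delta x)^2}+d_{i,j}^{k+1}\frac{v_{i,j+1}^{k+1}-2v_{i,j}^{k+1}+v_{i,j-1}^{k+1}}{(\Delta y)^2}+f_{i,j}^{k+1}.$$ Norm: $\|v^k\|_\infty=\max_{1\le i\le N_x-1,\,1\le j\le N_y-1}|v_{i,j}^k|$. Bound condition (B): there are constants $A>0$, $D>0$ such that for all $(x,y,t)\in\overline\Omega\times[0,T]$: $0\le a(x,y,t)\le A$, $0\le b(x,y,t)\le A$, $c(x,y,t)\ge D$, $d(x,y,t)\ge D$. *)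

(* Defs.v *)
From Stdlib Require Import Reals Lra List Factorial.
Open Scope R_scope.

Fixpoint poch (z : R) (n : nat) : R :=
  match n with
  | O => z
  | S n' => poch z n' * (z + INR n)
  end.

(* Gauss/Euler product formula: Gamma z = lim_n n^z n! / (z (z+1) ... (z+n)), z > 0 *)
Definition gauss_seq (z : R) (n : nat) : R :=
  Rpower (INR n) z * INR (fact n) / poch z n.

(* s^(1-alpha) with the convention 0^(1-alpha) = 0 (Stdlib's Rpower 0 _ = 1) *)
Definition powa (alpha : R) (s : nat) : R :=
  match s with O => 0 | _ => Rpower (INR s) (1 - alpha) end.

Definition omega_w (alpha : R) (s : nat) : R := powa alpha (S s) - powa alpha s.

(* sigma_{alpha,dt} = 1 / (dt^alpha * Gamma(2-alpha)), with G = Gamma(2-alpha) *)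
Definition sigma_ad (alpha dt G : R) : R := 1 / (Rpower dt alpha * G).

Definition gridnorm (Nx Ny : nat) (v : nat -> nat -> nat -> R) (k : nat) : R :=
  fold_right Rmax 0
    (map (fun i => fold_right Rmax 0
                     (map (fun j => Rabs (v i j k)) (seq 1 (Ny - 1))))
         (seq 1 (Nx - 1))).

(* Main.v *)
Require Import Defs.
From Stdlib Require Import Reals Lra Lia List Factorial.
Open Scope R_scope.

Lemma rpow_pos x y : 0 < Rpower x y.
Proof. unfold Rpower. apply exp_pos. Qed.

Lemma poch_pos z n : 0 < z -> 0 < poch z n.
Proof.
  intros Hz. induction n; cbn [poch]; auto.
  apply Rmult_lt_0_compat; auto. pose proof (pos_INR (S n)). lra.
Qed.

Lemma ln_bound y : 0 < y -> ln y <= y - 1.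
Proof. intros Hy. pose proof (exp_ineq1_le (ln y)). rewrite exp_ln in H; lra. Qed.

Lemma gauss_step z n : 0 < z -> (1 <= n)%nat -> gauss_seq z n <= gauss_seq z (S n).
Proof.
  intros Hz Hn. unfold gauss_seq.
  assert (Hn0 : 0 < INR n) by (apply lt_0_INR; lia).
  assert (HS : INR (S n) = INR n + 1) by (rewrite S_INR; ring).
  pose proof (poch_pos z n Hz) as HP.
  assert (HF : 0 < INR (fact n)) by (apply lt_0_INR; apply lt_O_fact).
  change (fact (S n)) with (S n * fact n)%nat. rewrite mult_INR.
  change (poch z (S n)) with (poch z n * (z + INR (S n))). rewrite HS.
  assert (Hk : Rpower (INR n) z * (z + (INR n + 1)) <= Rpower (INR n + 1) z * (INR n + 1)).
  { assert (Hl : 1 / (INR n + 1) <= ln (INR n + 1) - ln (INR n)).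
    { pose proof (ln_bound (INR n / (INR n + 1))) as Hb.
      assert (Hm : INR n = INR n / (INR n + 1) * (INR n + 1)) by (field; lra).
      assert (0 < INR n / (INR n + 1)) by (apply Rdiv_lt_0_compat; lra).
      assert (ln (INR n) = ln (INR n / (INR n + 1)) + ln (INR n + 1)).
      { rewrite Hm at 1. apply ln_mult; lra. }
      assert (INR n / (INR n + 1) - 1 = - (1 / (INR n + 1))) by (field; lra).
      lra. }
    assert (He : Rpower (INR n + 1) z = Rpower (INR n) z * exp (z * (ln (INR n + 1) - ln (INR n)))).
    { unfold Rpower. rewrite <- exp_plus. f_equal. ring. }
    rewrite He.
    pose proof (exp_ineq1_le (z * (ln (INR n + 1) - ln (INR n)))) as Hx.
    pose proof (rpow_pos (INR n) z) as Hr.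
    assert (z * (1 / (INR n + 1)) <= z * (ln (INR n + 1) - ln (INR n))) by (apply Rmult_le_compat_l; lra).
    assert (Hq : z + (INR n + 1) = (1 + z * (1 / (INR n + 1))) * (INR n + 1)) by (field; lra).
    rewrite Hq.
    rewrite <- Rmult_assoc.
    apply Rmult_le_compat_r; [lra|].
    apply Rmult_le_compat_l; lra. }
  assert (Hz1 : 0 < z + (INR n + 1)) by lra.
  apply Rle_trans with (Rpower (INR n + 1) z * (INR n + 1) * INR (fact n) / (poch z n * (z + (INR n + 1)))).
  - apply Rle_trans with (Rpower (INR n) z * (z + (INR n + 1)) * INR (fact n) / (poch z n * (z + (INR n + 1)))).
    + right. field. lra.
    + unfold Rdiv. apply Rmult_le_compat_r.
      * left. apply Rinv_0_lt_compat. apply Rmult_lt_0_compat; lra.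
      * apply Rmult_le_compat_r; lra.
  - right. field. lra.
Qed.

Lemma G_pos z G : 0 < z -> Un_cv (gauss_seq z) G -> 0 < G.
Proof.
  intros Hz HG.
  assert (H1 : 0 < gauss_seq z 1).
  { unfold gauss_seq. apply Rdiv_lt_0_compat. apply Rmult_lt_0_compat. apply rpow_pos.
    apply lt_0_INR. apply lt_O_fact. apply poch_pos; auto. }
  assert (Hm : forall m, (1 <= m)%nat -> gauss_seq z 1 <= gauss_seq z m).
  { intros m Hm. induction m. lia. destruct (Nat.eq_dec m 0). subst. lra.
    apply Rle_trans with (gauss_seq z m). apply IHm; lia. apply gauss_step; auto; lia. }
  destruct (Rlt_le_dec G (gauss_seq z 1)) as [Hlt|Hle]; [|lra].
  destruct (HG (gauss_seq z 1 - G)) as [N HN]; [lra|].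
  specialize (HN (S N) ltac:(lia)). unfold R_dist in HN.
  specialize (Hm (S N) ltac:(lia)).
  apply Rabs_def2 in HN. lra.
Qed.

Lemma rpow1 y : Rpower 1 y = 1.
Proof. unfold Rpower. rewrite ln_1, Rmult_0_r. apply exp_0. Qed.

Lemma powaS al s : powa al (S s) = Rpower (INR (S s)) (1 - al).
Proof. reflexivity. Qed.

Lemma omega0 al : omega_w al 0 = 1.
Proof. unfold omega_w. rewrite powaS. simpl. rewrite rpow1. lra. Qed.

Lemma omega_nonneg al s : al < 1 -> 0 <= omega_w al s.
Proof.
  intros Ha. unfold omega_w. destruct s.
  - rewrite powaS. simpl powa. rewrite rpow1. lra.
  - rewrite !powaS. assert (Rpower (INR (S s)) (1 - al) <= Rpower (INR (S (S s))) (1 - al)); [|lra].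
    apply Rle_Rpower_l. lra. split. apply lt_0_INR; lia. apply le_INR; lia.
Qed.

Lemma omega_dec al s : 0 < al < 1 -> omega_w al (S s) <= omega_w al s.
Proof.
  intros Ha. set (be := 1 - al). unfold omega_w. destruct s.
  - rewrite !powaS. simpl powa. replace (INR 1) with 1 by reflexivity. rewrite rpow1.
    replace (INR 2) with 2 by (simpl; ring).
    assert (Rpower 2 be <= Rpower 2 1). { left. apply Rpower_lt; unfold be; lra. }
 
    rewrite Rpower_1 in H by lra. unfold be in H. lra.
  - rewrite !powaS.
    set (x := INR (S s)).
    assert (Hx : 1 <= x) by (unfold x; rewrite S_INR; pose proof (pos_INR s); lra).
    replace (INR (S (S s))) with (x + 1) by (unfold x; rewrite (S_INR (S s)); ring).
    replace (INR (S (S (S s)))) with (x + 1 + 1) by (unfold x; rewrite !S_INR; ring).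
    destruct (MVT_cor2 (fun t => Rpower t be) (fun t => be * Rpower t (be - 1)) x (x + 1)) as [c1 [E1 H1]].
    lra. intros c Hc. apply derivable_pt_lim_power. lra.
    destruct (MVT_cor2 (fun t => Rpower t be) (fun t => be * Rpower t (be - 1)) (x+1) (x + 1 + 1)) as [c2 [E2 H2]].
    lra. intros c Hc. apply derivable_pt_lim_power. lra.
    cbv beta in E1, E2.
    assert (Rpower c2 (be - 1) <= Rpower c1 (be - 1)).
    { unfold Rpower. left. apply exp_increasing.
      assert (ln c1 < ln c2) by (apply ln_increasing; lra).
      assert (be - 1 < 0) by (unfold be; lra). nra. }
    assert (0 < be) by (unfold be; lra).
    assert (be * Rpower c2 (be - 1) <= be * Rpower c1 (be - 1)) by (apply Rmult_le_compat_l; lra).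
    replace (x + 1 + 1 - (x + 1)) with 1 in E2 by ring.
    replace (x + 1 - x) with 1 in E1 by ring. unfold be in *. lra.
Qed.

Section SumL.
Variable w : nat -> R.
Hypothesis Hw0 : w 0%nat = 1.
Hypothesis Hdec : forall s, w (S s) <= w s.
Hypothesis Hpos : forall s, 0 <= w s.

Lemma sumQ k : forall (u : nat -> R) N, (forall p, (1 <= p <= k)%nat -> Rabs (u p) <= N) ->
  Rabs (u (S k) - sum_f_R0 (fun s => w s * (u (k - s + 1)%nat - u (k - s)%nat)) k - w k * u 0%nat)
  <= (1 - w k) * N.
Proof.
  induction k; intros u N Hu.
  - simpl. rewrite Hw0. replace (u 1%nat - 1 * (u 1%nat - u 0%nat) - 1 * u 0%nat) with 0 by ring.
    rewrite Rabs_R0. lra.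
  - specialize (IHk (fun p => u (S p)) N ltac:(intros p Hp; apply Hu; lia)).
    cbv beta in IHk. rewrite tech5.
    rewrite (sum_eq (fun s => w s * (u (S k - s + 1)%nat - u (S k - s)%nat))
                    (fun s => w s * (u (S (k - s + 1)) - u (S (k - s))))).
    2:{ intros i Hi. replace (S k - i + 1)%nat with (S (k - i + 1)) by lia.
        replace (S k - i)%nat with (S (k - i)) by lia. reflexivity. }
    rewrite Nat.sub_diag. simpl (0 + 1)%nat.
    set (Sm := sum_f_R0 _ k) in *.
    replace (u (S (S k)) - (Sm + w (S k) * (u 1%nat - u 0%nat)) - w (S k) * u 0%nat)
      with ((u (S (S k)) - Sm - w k * u 1%nat) + (w k - w (S k)) * u 1%nat) by ring.
    eapply Rle_trans. apply Rabs_triang. rewrite Rabs_mult.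
    rewrite (Rabs_pos_eq (w k - w (S k))) by (specialize (Hdec k); lra).
    assert ((w k - w (S k)) * Rabs (u 1%nat) <= (w k - w (S k)) * N).
    { apply Rmult_le_compat_l. specialize (Hdec k); lra. apply Hu; lia. }
    lra.
Qed.

Lemma sumR k (u : nat -> R) N : (forall p, (p <= k)%nat -> Rabs (u p) <= N) ->
  Rabs (u (S k) - sum_f_R0 (fun s => w s * (u (k - s + 1)%nat - u (k - s)%nat)) k) <= N.
Proof.
  intros Hu. pose proof (sumQ k u N ltac:(intros; apply Hu; lia)) as HQ.
  set (Sm := sum_f_R0 _ k) in *.
  replace (u (S k) - Sm) with ((u (S k) - Sm - w k * u 0%nat) + w k * u 0%nat) by ring.
  eapply Rle_trans. apply Rabs_triang. rewrite Rabs_mult, (Rabs_pos_eq (w k)) by auto.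
  assert (w k * Rabs (u 0%nat) <= w k * N) by (apply Rmult_le_compat_l; auto; apply Hu; lia).
  lra.
Qed.
End SumL.

Lemma fm_ge0 {A} (f : A -> R) l : 0 <= fold_right Rmax 0 (map f l).
Proof. induction l; simpl. lra. eapply Rle_trans; [apply IHl|apply Rmax_r]. Qed.

Lemma fm_ge {A} (f : A -> R) l x : In x l -> f x <= fold_right Rmax 0 (map f l).
Proof.
  induction l; simpl; intros H. contradiction. destruct H. subst; apply Rmax_l.
  eapply Rle_trans; [apply IHl; auto|apply Rmax_r].
Qed.

Lemma fm_le {A} (f : A -> R) l B : 0 <= B -> (forall x, In x l -> f x <= B) ->
  fold_right Rmax 0 (map f l) <= B.
Proof.
  intros HB. induction l; simpl; intros H. lra. apply Rmax_lub. apply H; auto. apply IHl; auto.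
Qed.

Lemma fm_attain {A} (f : A -> R) l : fold_right Rmax 0 (map f l) = 0 \/
  exists x, In x l /\ fold_right Rmax 0 (map f l) = f x.
Proof.
  induction l; simpl. auto. unfold Rmax at 1 3. destruct Rle_dec.
  - destruct IHl as [H|[x [H1 H2]]]. left; exact H. right. exists x; split; [right; exact H1|exact H2].
  - right. exists a; split; [left; reflexivity|reflexivity].
Qed.

Lemma gn_entry Nx Ny v k i j : (1 <= i <= Nx - 1)%nat -> (1 <= j <= Ny - 1)%nat ->
  (0 < Nx)%nat -> (0 < Ny)%nat -> Rabs (v i j k) <= gridnorm Nx Ny v k.
Proof.
  intros Hi Hj Hx Hy. unfold gridnorm.
  eapply Rle_trans; [|apply (fm_ge (fun i => fold_right Rmax 0 (map (fun j => Rabs (v i j k)) (seq 1 (Ny - 1)))))].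
  apply (fm_ge (fun j => Rabs (v i j k))). apply in_seq; lia. apply in_seq; lia.
Qed.

Lemma gn_attain Nx Ny v k : gridnorm Nx Ny v k = 0 \/ exists i j, (1 <= i <= Nx - 1)%nat /\
  (1 <= j <= Ny - 1)%nat /\ gridnorm Nx Ny v k = Rabs (v i j k).
Proof.
  unfold gridnorm.
  destruct (fm_attain (fun i => fold_right Rmax 0 (map (fun j => Rabs (v i j k)) (seq 1 (Ny - 1)))) (seq 1 (Nx - 1))) as [H|[i [Hi H]]]; auto.
  rewrite H. apply in_seq in Hi.
  destruct (fm_attain (fun j => Rabs (v i j k)) (seq 1 (Ny - 1))) as [H'|[j [Hj H']]]; auto.
  right. apply in_seq in Hj. exists i, j. split. lia. split. lia. auto.
Qed.

Lemma gn_le Nx Ny v k B : 0 <= B -> (forall i j, (1 <= i <= Nx - 1)%nat -> (1 <= j <= Ny - 1)%nat -> Rabs (v i j k) <= B) ->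
  gridnorm Nx Ny v k <= B.
Proof.
  intros HB H. unfold gridnorm. apply fm_le; auto. intros i Hi. apply fm_le; auto.
  intros j Hj. apply in_seq in Hi, Hj. apply H; lia.
Qed.

Lemma Rdiv_le_0_compat' x y : 0 <= x -> 0 < y -> 0 <= x / y.
Proof. intros. unfold Rdiv. apply Rmult_le_pos; auto. left; apply Rinv_0_lt_compat; auto. Qed.

Theorem mainTheorem1
  (alpha T xL xR yL yR : R) (a b c d f : R -> R -> R -> R) (psi : R -> R -> R)
  (Nx Ny Nt : nat) (A D G : R) (v : nat -> nat -> nat -> R) :
  0 < alpha < 1 -> 0 < T -> xL < xR -> yL < yR ->
  (0 < Nx)%nat -> (0 < Ny)%nat -> (0 < Nt)%nat ->
  (* G = Gamma(2 - alpha), via the Gauss product formula *)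
  Un_cv (gauss_seq (2 - alpha)) G ->
  (* bound condition (B) *)
  0 < A -> 0 < D ->
  (forall x y t, xL <= x <= xR -> yL <= y <= yR -> 0 <= t <= T ->
     0 <= a x y t <= A /\ 0 <= b x y t <= A /\ D <= c x y t /\ D <= d x y t) ->
  let dx := (xR - xL) / INR Nx in
  let dy := (yR - yL) / INR Ny in
  let dt := T / INR Nt in
  Rmax dx dy <= 2 * D / A ->
  (* f == 0 *)
  (forall x y t, xL <= x <= xR -> yL <= y <= yR -> 0 <= t <= T -> f x y t = 0) ->
  let X := fun i : nat => xL + INR i * dx in
  let Y := fun j : nat => yL + INR j * dy in
  let tt := fun k : nat => INR k * dt in
  (* initial condition *)
  (forall i j, (i <= Nx)%nat -> (j <= Ny)%nat -> v i j 0%nat = psi (X i) (Y j)) ->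
  (* homogeneous Dirichlet boundary condition for k >= 1 *)
  (forall i j k, (i <= Nx)%nat -> (j <= Ny)%nat -> (1 <= k <= Nt)%nat ->
     (i = 0%nat \/ i = Nx \/ j = 0%nat \/ j = Ny) -> v i j k = 0) ->
  (* the scheme (IFDS) *)
  (forall i j k, (1 <= i <= Nx - 1)%nat -> (1 <= j <= Ny - 1)%nat -> (k <= Nt - 1)%nat ->
     sigma_ad alpha dt G *
       sum_f_R0 (fun s => omega_w alpha s * (v i j (k - s + 1)%nat - v i j (k - s)%nat)) k
     + a (X i) (Y j) (tt (S k)) * (v (S i) j (S k) - v (i - 1)%nat j (S k)) / (2 * dx)
     + b (X i) (Y j) (tt (S k)) * (v i (S j) (S k) - v i (j - 1)%nat (S k)) / (2 * dy)
     = c (X i) (Y j) (tt (S k)) *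
         (v (S i) j (S k) - 2 * v i j (S k) + v (i - 1)%nat j (S k)) / (dx * dx)
     + d (X i) (Y j) (tt (S k)) *
         (v i (S j) (S k) - 2 * v i j (S k) + v i (j - 1)%nat (S k)) / (dy * dy)
     + f (X i) (Y j) (tt (S k))) ->
  forall k, (1 <= k <= Nt)%nat -> gridnorm Nx Ny v k <= gridnorm Nx Ny v 0%nat.
Proof.
  intros Hal HT Hx Hy HNx HNy HNt HG HA HD HB dx dy dt Hmax Hf X Y tt Hinit Hbd Hsch k Hk.
  assert (HNx' : 0 < INR Nx) by (apply lt_0_INR; lia).
  assert (HNy' : 0 < INR Ny) by (apply lt_0_INR; lia).
  assert (HNt' : 0 < INR Nt) by (apply lt_0_INR; lia).
  assert (Hdx : 0 < dx) by (unfold dx; apply Rdiv_lt_0_compat; lra).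
  assert (Hdy : 0 < dy) by (unfold dy; apply Rdiv_lt_0_compat; lra).
  assert (Hdt : 0 < dt) by (unfold dt; apply Rdiv_lt_0_compat; lra).
  assert (Hdx2 : dx <= 2 * D / A) by (eapply Rle_trans; [apply Rmax_l|exact Hmax]).
  assert (Hdy2 : dy <= 2 * D / A) by (eapply Rle_trans; [apply Rmax_r|exact Hmax]).
  assert (HAD : A * (2 * D / A) = 2 * D) by (field; lra).
  assert (Hsig : 0 < sigma_ad alpha dt G).
  { unfold sigma_ad. apply Rdiv_lt_0_compat. lra. apply Rmult_lt_0_compat. apply rpow_pos.
    apply (G_pos (2 - alpha)); auto; lra. }
  set (sg := sigma_ad alpha dt G) in *.
  set (N0 := gridnorm Nx Ny v 0%nat).
  assert (HN0 : 0 <= N0) by (unfold N0, gridnorm; apply fm_ge0).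
  assert (Hmain : forall m, (m <= Nt)%nat -> forall p, (p <= m)%nat -> gridnorm Nx Ny v p <= N0).
  2:{ apply (Hmain k); lia. }
  induction m; intros Hm p Hp.
  { replace p with 0%nat by lia. unfold N0; lra. }
  destruct (Nat.eq_dec p (S m)) as [->|Hne].
  2:{ apply IHm; lia. }
  clear Hp.
  destruct (gn_attain Nx Ny v (S m)) as [H0|[i0 [j0 [Hi0 [Hj0 HM]]]]].
  { rewrite H0; auto. }
  set (M := gridnorm Nx Ny v (S m)) in *.
  assert (Hnb : forall i j, (i <= Nx)%nat -> (j <= Ny)%nat -> Rabs (v i j (S m)) <= M).
  { intros i j Hi Hj.
    destruct (Nat.eq_dec i 0); [|destruct (Nat.eq_dec i Nx)];
    [| |destruct (Nat.eq_dec j 0); [|destruct (Nat.eq_dec j Ny)]];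
    try (rewrite Hbd by (auto; lia); rewrite Rabs_R0; rewrite HM; apply Rabs_pos).
    unfold M; apply gn_entry; lia. }
  assert (Hpast : forall p, (p <= m)%nat -> Rabs (v i0 j0 p) <= N0).
  { intros p Hp. eapply Rle_trans. apply gn_entry; eauto. apply IHm; lia. }
  pose proof (sumR (omega_w alpha) (omega0 alpha) (fun s => omega_dec alpha s Hal)
                (fun s => omega_nonneg alpha s (proj2 Hal)) m (fun p => v i0 j0 p) N0 Hpast) as HR.
  cbv beta in HR.
  specialize (Hsch i0 j0 m Hi0 Hj0 ltac:(lia)).
  assert (HXi : xL <= X i0 <= xR).
  { unfold X. assert (INR i0 <= INR Nx) by (apply le_INR; lia).
    assert (INR Nx * dx = xR - xL) by (unfold dx; field; lra).
    pose proof (pos_INR i0). split; nra. }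
  assert (HYj : yL <= Y j0 <= yR).
  { unfold Y. assert (INR j0 <= INR Ny) by (apply le_INR; lia).
    assert (INR Ny * dy = yR - yL) by (unfold dy; field; lra).
    pose proof (pos_INR j0). split; nra. }
  assert (Htt : 0 <= tt (S m) <= T).
  { unfold tt. assert (INR (S m) <= INR Nt) by (apply le_INR; lia).
    assert (INR Nt * dt = T) by (unfold dt; field; lra).
    pose proof (pos_INR (S m)). split; nra. }
  destruct (HB _ _ _ HXi HYj Htt) as [[Ha0 Ha1] [[Hb0 Hb1] [Hc Hd]]].
  rewrite (Hf _ _ _ HXi HYj Htt) in Hsch.
  set (a0 := a (X i0) (Y j0) (tt (S m))) in *.
  set (b0 := b (X i0) (Y j0) (tt (S m))) in *.
  set (c0 := c (X i0) (Y j0) (tt (S m))) in *.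
  set (d0 := d (X i0) (Y j0) (tt (S m))) in *.
  set (Sm := sum_f_R0 _ m) in *.
  set (w := v i0 j0 (S m)) in *.
  set (E := v (S i0) j0 (S m)) in *.
  set (W := v (i0 - 1)%nat j0 (S m)) in *.
  set (Nn := v i0 (S j0) (S m)) in *.
  set (Ss := v i0 (j0 - 1)%nat (S m)) in *.
  assert (HE : Rabs E <= M) by (apply Hnb; lia).
  assert (HW : Rabs W <= M) by (apply Hnb; lia).
  assert (HNn : Rabs Nn <= M) by (apply Hnb; lia).
  assert (HSs : Rabs Ss <= M) by (apply Hnb; lia).
  set (R0 := w - Sm) in *.
  set (al1 := c0 / (dx * dx) - a0 / (2 * dx)).
  set (al2 := c0 / (dx * dx) + a0 / (2 * dx)).
  set (be1 := d0 / (dy * dy) - b0 / (2 * dy)).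
  set (be2 := d0 / (dy * dy) + b0 / (2 * dy)).
  assert (Hadx : a0 * dx <= 2 * c0).
  { assert (a0 * dx <= A * dx) by (apply Rmult_le_compat_r; lra).
    assert (A * dx <= A * (2 * D / A)) by (apply Rmult_le_compat_l; lra). lra. }
  assert (Hbdy : b0 * dy <= 2 * d0).
  { assert (b0 * dy <= A * dy) by (apply Rmult_le_compat_r; lra).
    assert (A * dy <= A * (2 * D / A)) by (apply Rmult_le_compat_l; lra). lra. }
  assert (Hal1 : 0 <= al1).
  { replace al1 with ((2 * c0 - a0 * dx) / (2 * (dx * dx))) by (unfold al1; field; lra).
    apply Rdiv_le_0_compat'. lra. nra. }
  assert (Hal2 : 0 <= al2).
  { unfold al2. assert (0 <= c0 / (dx * dx)) by (apply Rdiv_le_0_compat'; nra).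
    assert (0 <= a0 / (2 * dx)) by (apply Rdiv_le_0_compat'; lra). lra. }
  assert (Hbe1 : 0 <= be1).
  { replace be1 with ((2 * d0 - b0 * dy) / (2 * (dy * dy))) by (unfold be1; field; lra).
    apply Rdiv_le_0_compat'. lra. nra. }
  assert (Hbe2 : 0 <= be2).
  { unfold be2. assert (0 <= d0 / (dy * dy)) by (apply Rdiv_le_0_compat'; nra).
    assert (0 <= b0 / (2 * dy)) by (apply Rdiv_le_0_compat'; lra). lra. }
  assert (Hid : w * (sg + al1 + al2 + be1 + be2) = sg * R0 + al1 * E + al2 * W + be1 * Nn + be2 * Ss).
  { assert (Hz : w * (sg + al1 + al2 + be1 + be2) - (sg * R0 + al1 * E + al2 * W + be1 * Nn + be2 * Ss)
      = (sg * Sm + a0 * (E - W) / (2 * dx) + b0 * (Nn - Ss) / (2 * dy))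
        - (c0 * (E - 2 * w + W) / (dx * dx) + d0 * (Nn - 2 * w + Ss) / (dy * dy) + 0)).
    { unfold R0, al1, al2, be1, be2. field. lra. }
    rewrite Hsch in Hz. lra. }
  assert (Hbnd : Rabs w * (sg + al1 + al2 + be1 + be2) <= sg * N0 + (al1 + al2 + be1 + be2) * M).
  { rewrite <- (Rabs_pos_eq (sg + al1 + al2 + be1 + be2)) by lra.
    rewrite <- Rabs_mult, Hid.
    assert (h1 : Rabs (sg * R0) <= sg * N0).
    { rewrite Rabs_mult, Rabs_pos_eq by lra. apply Rmult_le_compat_l; lra. }
    assert (h2 : Rabs (al1 * E) <= al1 * M).
    { rewrite Rabs_mult, Rabs_pos_eq by lra. apply Rmult_le_compat_l; lra. }
    assert (h3 : Rabs (al2 * W) <= al2 * M).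
    { rewrite Rabs_mult, Rabs_pos_eq by lra. apply Rmult_le_compat_l; lra. }
    assert (h4 : Rabs (be1 * Nn) <= be1 * M).
    { rewrite Rabs_mult, Rabs_pos_eq by lra. apply Rmult_le_compat_l; lra. }
    assert (h5 : Rabs (be2 * Ss) <= be2 * M).
    { rewrite Rabs_mult, Rabs_pos_eq by lra. apply Rmult_le_compat_l; lra. }
    pose proof (Rabs_triang (sg * R0 + al1 * E + al2 * W + be1 * Nn) (be2 * Ss)).
    pose proof (Rabs_triang (sg * R0 + al1 * E + al2 * W) (be1 * Nn)).
    pose proof (Rabs_triang (sg * R0 + al1 * E) (al2 * W)).
    pose proof (Rabs_triang (sg * R0) (al1 * E)).
    lra. }
  rewrite <- HM in Hbnd.
  assert (sg * M <= sg * N0) by nra.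
  apply Rmult_le_reg_l with sg; lra.
Qed.
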